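(* Let $R$ be a commutative Noetherian ring of prime characteristic $p$ and $G$ an $x$-torsion-free left $R[x,f]$-module. Then $\mathcal{I}(G)=\{\mathfrak{p}_1\cap\dots\cap\mathfrak{p}_t: t\in\mathbb{N}_0,\ \mathfrak{p}_1,\dots,\mathfrak{p}_t\in\mathcal{I}(G)\cap\operatorname{Spec}(R)\}$, where the empty intersection ($t=0$) is $R$.
   Context: $R[x,f]$ is the Frobenius skew polynomial ring: free left $R$-module on $(x^i)_{i\ge0}$, $xr=r^px$. $x$-torsion-free: $xg=0\Rightarrow g=0$. $\operatorname{grann}N$ is the set of $\sum r_ix^i$ with each $r_ix^i$ annihilating the $R[x,f]$-submodule $N$. $\mathcal{I}(G)$ (the $G$-special $R$-ideals) is the set of ideals $\mathfrak{b}$ of $R$ with $\operatorname{grann}N=\bigoplus_{n\ge0}\mathfrak{b}x^n$ for some $R[x,f]$-submodule $N$ of $G$. *)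

(* Defs.v *)
From mathcomp Require Import all_boot all_order all_algebra.
Set Implicit Arguments. Unset Strict Implicit. Unset Printing Implicit Defensive.
Import GRing.Theory.
Local Open Scope ring_scope.

Definition is_ideal (R : comNzRingType) (I : R -> Prop) : Prop :=
  I 0 /\ (forall a b, I a -> I b -> I (a + b)) /\ (forall r a, I a -> I (r * a)).

Definition noetherian (R : comNzRingType) : Prop :=
  forall I : nat -> R -> Prop,
    (forall n, is_ideal (I n)) ->
    (forall n r, I n r -> I n.+1 r) ->
    exists N, forall n, (N <= n)%N -> forall r, I n r <-> I N r.

Definition is_prime_ideal (R : comNzRingType) (P : R -> Prop) : Prop :=
  is_ideal P /\ ~ P 1 /\ (forall a b, P (a * b) -> P a \/ P b).

(* A left R[x,f]-module structure on the R-module V: the action of x is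
   an additive map phi with phi (r *: g) = r^p *: phi g  (x r = r^p x). *)
Definition frob_skew (R : comNzRingType) (p : nat) (V : lmodType R) (phi : V -> V) : Prop :=
  (forall g h, phi (g + h) = phi g + phi h) /\
  (forall (r : R) g, phi (r *: g) = r ^+ p *: phi g).

Definition x_torsion_free (R : comNzRingType) (V : lmodType R) (phi : V -> V) : Prop :=
  forall g, phi g = 0 -> g = 0.

Definition is_Rxf_submodule (R : comNzRingType) (V : lmodType R) (phi : V -> V)
    (N : V -> Prop) : Prop :=
  N 0 /\ (forall g h, N g -> N h -> N (g + h)) /\
  (forall (r : R) g, N g -> N (r *: g)) /\ (forall g, N g -> N (phi g)).

(* r x^n annihilates N  iff  r * x^n * g = r *: phi^n g = 0 for all g in N. *)
Definition monomial_annihilates (R : comNzRingType) (V : lmodType R) (phi : V -> V)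
    (N : V -> Prop) (r : R) (n : nat) : Prop :=
  forall g, N g -> r *: iter n phi g = 0.

(* grann N = (+)_{n>=0} b x^n: for every n, the coefficients r with
   r x^n in grann N are exactly the elements of b. *)
Definition grann_eq (R : comNzRingType) (V : lmodType R) (phi : V -> V)
    (N : V -> Prop) (b : R -> Prop) : Prop :=
  forall (n : nat) (r : R), monomial_annihilates phi N r n <-> b r.

Definition G_special (R : comNzRingType) (V : lmodType R) (phi : V -> V)
    (b : R -> Prop) : Prop :=
  is_ideal b /\ exists N, is_Rxf_submodule phi N /\ grann_eq phi N b.

(* Main.v *)
Require Import Defs.
From mathcomp Require Import all_boot all_order all_algebra.
From mathcomp Require Import zify.
From Stdlib Require Import Classical ClassicalEpsilon.
Local Open Scope ring_scope.
Import GRing.Theory.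
Set Implicit Arguments.

Section Aux.
Variables (R : comNzRingType) (p : nat) (G : lmodType R) (phi : G -> G).
Hypothesis hp2 : (1 < p)%N.
Hypothesis hphi : frob_skew p phi.
Hypothesis htf : x_torsion_free phi.

Definition Ann (A : G -> Prop) (r : R) : Prop :=
  forall h, A h -> forall n, r *: iter n phi h = 0.

Definition cl (b : R -> Prop) (g : G) : Prop :=
  forall r, b r -> forall n, r *: iter n phi g = 0.

Definition spec (b : R -> Prop) : Prop := forall r, b r <-> Ann (cl b) r.

Lemma phi0 : phi 0 = 0.
Proof.
case: hphi => hD _.
have e : phi 0 + phi 0 = phi 0 + 0 by rewrite addr0 -hD addr0.
exact: (addrI _ e).
Qed.

Lemma iter0 n : iter n phi 0 = 0.
Proof. by elim: n => //= n ->; rewrite phi0. Qed.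

Lemma iterAdd n g h : iter n phi (g + h) = iter n phi g + iter n phi h.
Proof. case: hphi => hD _. by elim: n => //= n ->; rewrite hD. Qed.

Lemma iterZ n (r : R) g : iter n phi (r *: g) = r ^+ (p ^ n)%N *: iter n phi g.
Proof.
case: hphi => _ hZ. elim: n => [|n IH] /=; first by rewrite expr1.
by rewrite IH hZ -exprM expnSr.
Qed.

Lemma iter_tf n g : iter n phi g = 0 -> g = 0.
Proof.
elim: n g => [|n IH] g //= /htf; exact: IH.
Qed.

Lemma pn_pos n : (0 < p ^ n)%N.
Proof. by rewrite expn_gt0; apply/orP; left; lia. Qed.

Lemma killZ (x y : R) (v : G) : x *: v = 0 -> (y * x) *: v = 0.
Proof. by move=> h; rewrite -scalerA h scaler0. Qed.

Lemma Ann_ideal A : is_ideal (Ann A).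
Proof.
split; first by move=> h _ n; rewrite scale0r.
split; first by move=> a b ha hb h hh n; rewrite scalerDl ha ?hb ?addr0.
by move=> r a ha h hh n; apply: killZ; apply: ha.
Qed.

Lemma spec_ideal b : spec b -> is_ideal b.
Proof.
move=> hs; have [h0 [hD hM]] := Ann_ideal (cl b).
split; first by apply/hs.
split; first by move=> x y /hs hx /hs hy; apply/hs; apply: hD.
by move=> r a /hs ha; apply/hs; apply: hM.
Qed.

Lemma specA b A : (forall r, b r <-> Ann A r) -> spec b.
Proof.
move=> hb r; split.
  by move=> br h hh n; apply: hh.
move=> hr; apply/hb => h hA n; apply: hr => r' /hb hr' m.
exact: hr' h hA m.
Qed.

Lemma spec_G b : spec b -> G_special phi b.
Proof.
move=> hs; split; first exact: spec_ideal.
exists (cl b); split.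
  split; first by move=> r _ n; rewrite iter0 scaler0.
  split; first by move=> g h hg hh r br n; rewrite iterAdd scalerDr hg ?hh ?addr0.
  split; first by move=> s g hg r br n; rewrite iterZ scalerA mulrC -scalerA hg ?scaler0.
  by move=> g hg r br n; rewrite -iterSr; apply: hg.
move=> n r; split; last first.
  by move=> br g hg; apply: hg.
move=> hm; apply/hs => h hh m.
set d := iter m phi h.
have hd : cl b d by move=> r' br' k; rewrite /d -iterD; apply: hh.
apply: (@iter_tf n); rewrite iterZ.
have -> : r ^+ (p ^ n)%N = r ^+ (p ^ n).-1 * r.
  by rewrite -exprSr prednK // pn_pos.
by apply: killZ; apply: hm.
Qed.

Lemma G_spec b : G_special phi b -> spec b.
Proof.
case=> _ [N [_ hg]].
apply: (@specA b N) => r; split.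
  by move=> br h hN n; exact: (proj2 (hg n r) br h hN).
by move=> hA; apply: (proj1 (hg 0%N r)) => g hN; apply: (hA g hN 0%N).
Qed.

Definition colon (b J : R -> Prop) (r : R) : Prop := forall j, J j -> b (r * j).

Lemma spec_colon b J : spec b -> spec (colon b J).
Proof.
move=> hs.
apply: (@specA _ (fun g => exists j h m, [/\ J j, cl b h & g = j *: iter m phi h])).
move=> r; split.
  move=> hc g [j [h [m [hj hh ->]]]] n.
  rewrite iterZ -iterD scalerA.
  have -> : j ^+ (p ^ n)%N = j ^+ (p ^ n).-1 * j.
    by rewrite -exprSr prednK // pn_pos.
  rewrite mulrA [r * _]mulrC -mulrA; apply: killZ.
  by move/hs: (hc j hj); apply.
move=> hA j hj; apply/hs => h hh k.
rewrite -scalerA.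
have := hA (j *: iter k phi h) _ 0%N; apply.
by exists j, h, k.
Qed.

Lemma spec_rad b r : spec b -> b (r * r) -> b r.
Proof.
move=> hs hrr; apply/hs => h hh m.
have hrp : b (r ^+ p).
  have [_ [_ hM]] := spec_ideal hs.
  have -> : r ^+ p = r ^+ (p - 2) * (r * r).
    by rewrite -expr2 -exprD subnK //.
  by apply: hM.
apply: (@iter_tf 1%N); rewrite /= (proj2 hphi).
by move/hs: hrp => /(_ h hh m.+1).
Qed.

End Aux.

Lemma wf_ind (R : comNzRingType) (hR : noetherian R) (P : (R -> Prop) -> Prop) :
  (forall b, is_ideal b ->
     (forall b', is_ideal b' -> (forall r, b r -> b' r) -> (exists r, b' r /\ ~ b r) -> P b') ->
     P b) ->
  forall b, is_ideal b -> P b.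
Proof.
move=> step b0 hb0; apply: NNPP => hn0.
pose Bad := {b : R -> Prop | is_ideal b /\ ~ P b}.
have hnext : forall x : Bad, exists y : Bad,
    (forall r, sval x r -> sval y r) /\ (exists r, sval y r /\ ~ sval x r).
  move=> [b [hb hnb]] /=.
  apply: NNPP => hne; apply: hnb; apply: step => // b' hb' hsub hstr.
  apply: NNPP => hnb'; apply: hne.
  by exists (exist _ b' (conj hb' hnb')).
pose next := fun x => proj1_sig (constructive_indefinite_description _ (hnext x)).
have hnx : forall x, (forall r, sval x r -> sval (next x) r) /\
                     (exists r, sval (next x) r /\ ~ sval x r).
  by move=> x; rewrite /next; case: constructive_indefinite_description.
pose s := fun n => iter n next (exist _ b0 (conj hb0 hn0)).
have [N hN] := hR (fun n => sval (s n)) (fun n => proj1 (svalP (s n)))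
  (fun n r => proj1 (hnx (s n)) r).
have [r [h1 h2]] := proj2 (hnx (s N)).
by apply: h2; apply/(hN N.+1 (leqnSn N) r).
Qed.

Unset Implicit Arguments.

Theorem corollary3p7 (R : comNzRingType) (p : nat) (hp : p \in [pchar R])
    (hR : noetherian R) (G : lmodType R) (phi : G -> G)
    (hphi : frob_skew p phi) (htf : x_torsion_free phi) :
  forall b : R -> Prop,
    G_special phi b <->
    exists (t : nat) (P : nat -> R -> Prop),
      (forall i, (i < t)%N -> is_prime_ideal (P i) /\ G_special phi (P i)) /\
      (forall r, b r <-> (forall i, (i < t)%N -> P i r)).
Proof.
have hp2 : (1 < p)%N by apply: prime_gt1; apply: pcharf_prime hp.
move=> b; split; last first.
  move=> [t [P [hP hb]]].
  apply: (spec_G hp2 hphi htf).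
  apply: (@specA _ _ phi b (fun g => exists i, (i < t)%N /\ cl G phi (P i) g)).
  move=> r; split.
    move=> br g [i [hi hg]] n; apply: hg => //; exact: (proj1 (hb r) br i hi).
  move=> hA; apply/hb => i hi.
  have hs := G_spec (proj2 (hP i hi)).
  apply/hs => h hh n; apply: hA; by exists i.
move=> hG.
have hs := G_spec hG.
move: hs.
pattern b; apply: (wf_ind hR); last exact: (spec_ideal (G_spec hG)).
clear b hG.
move=> b hb IH hs.
case: (classic (b 1)) => h1.
  exists 0%N, (fun _ _ => True); split => // r; split => // _.
  by rewrite -(mulr1 r); apply: (proj2 (proj2 hb)).
case: (classic (exists a c, b (a * c) /\ ~ b a /\ ~ b c)) => hpr; last first.
  exists 1%N, (fun _ => b); split => //.
    move=> i _; split; last exact: (spec_G hp2 hphi htf).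
    split => //; split => // a c hac.
    case: (classic (b a)) => ha; first by left.
    case: (classic (b c)) => hc; first by right.
    by exfalso; apply: hpr; exists a, c.
  by move=> r; split => [br i _ | /(_ 0%N isT)].
case: hpr => a [c [hac [ha hc]]].
pose b1 := @colon R b (fun j => j = a).
pose b2 := @colon R b b1.
have hs1 : spec G phi b1 by exact: (spec_colon hp2 hphi _ hs).
have hs2 : spec G phi b2 by exact: (spec_colon hp2 hphi _ hs).
have hi1 := spec_ideal hs1.
have hi2 := spec_ideal hs2.
have hbj : forall r j, b r -> b (r * j).
  by move=> r j br; rewrite mulrC; apply: (proj2 (proj2 hb)).
have [t1 [P1 [hP1 e1]]] : exists t P,
    (forall i, (i < t)%N -> is_prime_ideal (P i) /\ G_special phi (P i)) /\
    (forall r, b1 r <-> (forall i, (i < t)%N -> P i r)).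
  apply: IH => //; first by move=> r br j _; apply: hbj.
  exists c; split => // j ->; by rewrite mulrC.
have [t2 [P2 [hP2 e2]]] : exists t P,
    (forall i, (i < t)%N -> is_prime_ideal (P i) /\ G_special phi (P i)) /\
    (forall r, b2 r <-> (forall i, (i < t)%N -> P i r)).
  apply: IH => //; first by move=> r br j _; apply: hbj.
  exists a; split => // j hj; rewrite mulrC; exact: hj.
have eb : forall r, b r <-> b1 r /\ b2 r.
  move=> r; split.
    by move=> br; split => j _; apply: hbj.
  case=> h1r h2r; apply: (spec_rad hp2 hphi htf r hs).
  exact: h2r r h1r.
exists (t1 + t2)%N, (fun i => if (i < t1)%N then P1 i else P2 (i - t1)%N).
split.
  move=> i hi; case: ifP => hit; first by apply: hP1.
  by apply: hP2; lia.
move=> r; rewrite eb e1 e2; split.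
  case=> H1 H2 i hi; case: ifP => hit; first by apply: H1.
  by apply: H2; lia.
move=> H; split.
  by move=> i hi; have := H i ltac:(lia); rewrite hi.
move=> i hi; have := H (t1 + i)%N ltac:(lia).
by rewrite ltnNge leq_addr /= addKn.
Qed.
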